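(* Let $\{\Omega_n\}_{n\ge1}$ be open convex subdomains of $\Omega$ such that for every $\delta>0$ there is $N(\delta)$ with $\overline{\Omega_\delta}\subset\Omega_n\subset\Omega$ for all $n\ge N(\delta)$, and let $v_n\in W^+(\Omega_n)$. Assume: (i) there is $v_0\in W^+(\Omega)$ with $\lim_{n\to\infty}v_n(\boldsymbol{x})=v_0(\boldsymbol{x})$ for every $\boldsymbol{x}\in\Omega$; (ii) for each $n$, the border $b_n$ of $v_n$ (a function on $\partial\Omega_n$, $b_n(\boldsymbol{y})=\liminf_{\Omega_n\ni\boldsymbol{x}\to\boldsymbol{y}}v_n(\boldsymbol{x})$) is real-valued and continuous on $\partial\Omega_n$; (iii) there is $\tilde b\in C^0(\partial\Omega)$ such that the graphs $\boldsymbol{S}_n=\{(\boldsymbol{x},b_n(\boldsymbol{x})):\boldsymbol{x}\in\partial\Omega_n\}$ have topological limit $\lim^T_{n\to\infty}\boldsymbol{S}_n=\tilde{\boldsymbol{S}}$, where $\tilde{\boldsymbol{S}}=\{(\boldsymbol{x},\tilde b(\boldsymbol{x})):\boldsymbol{x}\in\partial\Omega\}$. Let $b_0$ be the border of $v_0$, $b_0(\boldsymbol{x})=\liminf_{\Omega\ni\boldsymbol{x}'\to\boldsymbol{x}}v_0(\boldsymbol{x}')$. Then $b_0(\boldsymbol{x})\le\tilde b(\boldsymbol{x})$ for all $\boldsymbol{x}\in\partial\Omega$.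
   Context: $\Omega\subset\mathbb{R}^d$ is a bounded open convex domain; for an open convex set $U$, $W^+(U)$ denotes the set of convex real-valued functions on $U$. For $\delta>0$, $\Omega_\delta=\{\boldsymbol{x}\in\Omega:\operatorname{dist}(\boldsymbol{x},\partial\Omega)>\delta\}$. Topological limits: for sets $E_n\subset\mathbb{R}^m$, the superior topological limit $\overline{\lim}^T E_n$ is the set of $\boldsymbol{x}$ such that there exist a subsequence $n_k$ and $\boldsymbol{x}_{n_k}\in E_{n_k}$ with $\boldsymbol{x}_{n_k}\to\boldsymbol{x}$; the inferior topological limit $\underline{\lim}^T E_n$ is the set of $\boldsymbol{x}$ such that there exist $\boldsymbol{x}_n\in E_n$ (for all large $n$) with $\boldsymbol{x}_n\to\boldsymbol{x}$; if these coincide, the common set is the topological limit $\lim^T E_n$. *)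

(* Defs.v *)
From Stdlib Require Import Reals Lra.
Open Scope R_scope.

(* Points of R^d: real sequences vanishing from index d on. *)
Definition Rd (d : nat) := {x : nat -> R | forall i, (d <= i)%nat -> x i = 0}.
Definition coord {d : nat} (x : Rd d) : nat -> R := proj1_sig x.

Lemma comb_ok (d : nat) (t : R) (x y : Rd d) :
  forall i, (d <= i)%nat -> t * coord x i + (1 - t) * coord y i = 0.
Proof.
  intros i Hi. unfold coord. rewrite (proj2_sig x i Hi), (proj2_sig y i Hi). ring.
Qed.

Definition comb {d : nat} (t : R) (x y : Rd d) : Rd d :=
  exist _ (fun i => t * coord x i + (1 - t) * coord y i) (comb_ok d t x y).

Definition distRd {d : nat} (x y : Rd d) : R :=
  sqrt (sum_f_R0 (fun i => (coord x i - coord y i) ^ 2) d).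
Definition normRd {d : nat} (x : Rd d) : R :=
  sqrt (sum_f_R0 (fun i => (coord x i) ^ 2) d).

Definition distRd1 {d : nat} (z w : Rd d * R) : R :=
  sqrt ((distRd (fst z) (fst w)) ^ 2 + (snd z - snd w) ^ 2).

Definition is_open {d : nat} (U : Rd d -> Prop) : Prop :=
  forall x, U x -> exists r, 0 < r /\ forall y, distRd x y < r -> U y.
Definition is_convex {d : nat} (U : Rd d -> Prop) : Prop :=
  forall x y t, U x -> U y -> 0 <= t <= 1 -> U (comb t x y).
Definition is_bounded {d : nat} (U : Rd d -> Prop) : Prop :=
  exists M, forall x, U x -> normRd x <= M.
Definition nonempty {d : nat} (U : Rd d -> Prop) : Prop := exists x, U x.

Definition closure {d : nat} (U : Rd d -> Prop) (x : Rd d) : Prop :=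
  forall e, 0 < e -> exists y, U y /\ distRd x y < e.
Definition boundary {d : nat} (U : Rd d -> Prop) (x : Rd d) : Prop :=
  closure U x /\ closure (fun y => ~ U y) x.

(* Omega_delta = { x in Omega : dist(x, boundary Omega) > delta }
   (dist to the empty set is +infinity) *)
Definition inner_set {d : nat} (U : Rd d -> Prop) (delta : R) (x : Rd d) : Prop :=
  U x /\ exists delta', delta < delta' /\
          forall y, boundary U y -> delta' <= distRd x y.

Definition subset {d : nat} (A B : Rd d -> Prop) : Prop := forall x, A x -> B x.

(* W^+(U): v is convex (and real-valued) on U *)
Definition convex_fun_on {d : nat} (U : Rd d -> Prop) (v : Rd d -> R) : Prop :=
  forall x y t, U x -> U y -> 0 <= t <= 1 ->
    v (comb t x y) <= t * v x + (1 - t) * v y.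

Definition is_liminf {d : nat} (U : Rd d -> Prop) (f : Rd d -> R) (y : Rd d) (L : R)
  : Prop :=
  (forall e, 0 < e -> exists r, 0 < r /\
      forall x, U x -> distRd x y < r -> L - e < f x) /\
  (forall e r, 0 < e -> 0 < r -> exists x, U x /\ distRd x y < r /\ f x < L + e).

(* liminf_{U ∋ x -> y} f x <= c  (in the extended reals) *)
Definition liminf_le {d : nat} (U : Rd d -> Prop) (f : Rd d -> R) (y : Rd d) (c : R)
  : Prop :=
  forall e r, 0 < e -> 0 < r -> exists x, U x /\ distRd x y < r /\ f x < c + e.

Definition continuous_on {d : nat} (A : Rd d -> Prop) (b : Rd d -> R) : Prop :=
  forall y, A y -> forall e, 0 < e -> exists r, 0 < r /\
    forall y', A y' -> distRd y y' < r -> Rabs (b y' - b y) < e.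

Definition cv1 {d : nat} (zs : nat -> Rd d * R) (z : Rd d * R) : Prop :=
  forall e, 0 < e -> exists N, forall n, (N <= n)%nat -> distRd1 (zs n) z < e.

Definition upper_top_lim {d : nat} (E : nat -> Rd d * R -> Prop) (z : Rd d * R) : Prop :=
  exists (phi : nat -> nat) (zs : nat -> Rd d * R),
    (forall k, (phi k < phi (S k))%nat) /\
    (forall k, E (phi k) (zs k)) /\ cv1 zs z.
Definition lower_top_lim {d : nat} (E : nat -> Rd d * R -> Prop) (z : Rd d * R) : Prop :=
  exists (zs : nat -> Rd d * R) (N : nat),
    (forall n, (N <= n)%nat -> E n (zs n)) /\ cv1 zs z.
Definition top_lim {d : nat} (E : nat -> Rd d * R -> Prop) (S : Rd d * R -> Prop) : Prop :=
  forall z, (upper_top_lim E z <-> S z) /\ (lower_top_lim E z <-> S z).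

Definition graph_on_boundary {d : nat} (U : Rd d -> Prop) (b : Rd d -> R)
  (z : Rd d * R) : Prop :=
  boundary U (fst z) /\ snd z = b (fst z).

(* Main.v *)
Require Import Defs.
From Stdlib Require Import Reals Lra Lia Psatz FunctionalExtensionality ProofIrrelevance.
Open Scope R_scope.

Lemma Rd_of_ok (d : nat) (f : nat -> R) :
  forall i, (d <= i)%nat -> (if Nat.ltb i d then f i else 0) = 0.
Proof. intros i Hi. destruct (Nat.ltb_spec i d); [lia|reflexivity]. Qed.

Definition Rd_of {d : nat} (f : nat -> R) : Rd d :=
  exist _ (fun i => if Nat.ltb i d then f i else 0) (Rd_of_ok d f).

Lemma coord_Rd_of {d : nat} (f : nat -> R) i : (i < d)%nat -> coord (@Rd_of d f) i = f i.
Proof. intros Hi. unfold coord, Rd_of; simpl. destruct (Nat.ltb_spec i d); [reflexivity|lia]. Qed.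

Lemma Rd_ext {d : nat} (x y : Rd d) :
  (forall i, (i < d)%nat -> coord x i = coord y i) -> x = y.
Proof.
  destruct x as [fx Hx], y as [fy Hy]; unfold coord; simpl; intros H.
  assert (E : fx = fy).
  { apply functional_extensionality; intros i.
    destruct (Nat.ltb_spec i d). apply H; lia. rewrite Hx, Hy by lia; reflexivity. }
  subst fy. f_equal. apply proof_irrelevance.
Qed.

Lemma coord_zero {d : nat} (x : Rd d) i : (d <= i)%nat -> coord x i = 0.
Proof. intros; unfold coord; apply (proj2_sig x); auto. Qed.

Lemma sum_term_le (f : nat -> R) (n i : nat) :
  (forall k, 0 <= f k) -> (i <= n)%nat -> f i <= sum_f_R0 f n.
Proof.
  intros Hf; induction n; intros Hi.
  - replace i with 0%nat by lia; simpl; lra.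
  - simpl. destruct (Nat.eq_dec i (S n)).
    + subst. assert (0 <= sum_f_R0 f n) by (apply cond_pos_sum; auto). lra.
    + assert (f i <= sum_f_R0 f n) by (apply IHn; lia). specialize (Hf (S n)). lra.
Qed.

Lemma coord_le_dist {d : nat} (x y : Rd d) i :
  Rabs (coord x i - coord y i) <= distRd x y.
Proof.
  unfold distRd.
  destruct (Compare_dec.le_lt_dec i d) as [Hi|Hi].
  - rewrite <- sqrt_Rsqr_abs. apply sqrt_le_1_alt. unfold Rsqr.
    replace ((coord x i - coord y i) * (coord x i - coord y i))
      with ((coord x i - coord y i) ^ 2) by ring.
    apply (sum_term_le (fun k => (coord x k - coord y k) ^ 2)); auto. intros k. apply pow2_ge_0.
  - rewrite !coord_zero by lia. rewrite Rminus_0_r, Rabs_R0. apply sqrt_pos.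
Qed.

Lemma dist_le_box {d : nat} (x y : Rd d) c : 0 <= c ->
  (forall i, (i < d)%nat -> Rabs (coord x i - coord y i) <= c) ->
  distRd x y <= INR (S d) * c.
Proof.
  intros Hc H. unfold distRd.
  assert (Hs : sum_f_R0 (fun i => (coord x i - coord y i) ^ 2) d <= sum_f_R0 (fun _ => c ^ 2) d).
  { apply sum_Rle. intros i Hi. destruct (Nat.eq_dec i d).
    - subst. rewrite !coord_zero by lia. simpl. nra.
    - specialize (H i ltac:(lia)).
      assert (Rabs (coord x i - coord y i) ^ 2 <= c ^ 2).
      { apply pow_incr. split; [apply Rabs_pos| auto]. }
      rewrite <- Rsqr_pow2, <- Rsqr_abs, Rsqr_pow2 in H0. auto. }
  rewrite sum_cte in Hs.
  assert (H1 : 1 <= INR (S d)) by (apply (le_INR 1); lia).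
  rewrite <- (sqrt_pow2 (INR (S d) * c)) by nra.
  apply sqrt_le_1_alt. nra.
Qed.

Lemma Un_cv_le (u : nat -> R) l K N :
  Un_cv u l -> (forall n, (N <= n)%nat -> u n <= K) -> l <= K.
Proof.
  intros Hu HK. destruct (Rle_dec l K) as [|Hn]; auto.
  destruct (Hu (l - K)) as [M HM]; [lra|].
  specialize (HM (max N M) ltac:(lia)). specialize (HK (max N M) ltac:(lia)).
  unfold R_dist in HM. apply Rabs_def2 in HM. lra.
Qed.

Lemma Rabs_le_inv' (x a : R) : Rabs x <= a -> - a <= x <= a.
Proof. unfold Rabs; destruct (Rcase_abs x); lra. Qed.

Lemma Rabs_le_intro (x a : R) : - a <= x <= a -> Rabs x <= a.
Proof. unfold Rabs; destruct (Rcase_abs x); lra. Qed.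

Lemma distRd1_split {d : nat} (z w : Rd d * R) eps :
  distRd1 z w < eps -> distRd (fst z) (fst w) < eps /\ Rabs (snd z - snd w) < eps.
Proof.
  unfold distRd1. intros H.
  assert (H0 : 0 <= distRd (fst z) (fst w)) by (unfold distRd; apply sqrt_pos).
  set (a := distRd (fst z) (fst w)) in *. set (b := snd z - snd w) in *.
  split.
  - eapply Rle_lt_trans; [|exact H]. rewrite <- (sqrt_pow2 a) at 1 by auto.
    apply sqrt_le_1_alt. assert (0 <= b ^ 2) by apply pow2_ge_0. lra.
  - eapply Rle_lt_trans; [|exact H]. rewrite <- sqrt_Rsqr_abs.
    apply sqrt_le_1_alt. unfold Rsqr. assert (0 <= a ^ 2) by apply pow2_ge_0. simpl in *. nra.
Qed.

Definition inbox {d : nat} (k : nat) (c : Rd d) (rho : R) (y : Rd d) : Prop :=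
  forall i, (i < d)%nat -> ((i < k)%nat -> Rabs (coord y i - coord c i) <= rho) /\
                          ((k <= i)%nat -> coord y i = coord c i).

Definition setc {d : nat} (y : Rd d) (k : nat) (a : R) : Rd d :=
  Rd_of (fun i => if Nat.eqb i k then a else coord y i).

Lemma coord_setc {d : nat} (y : Rd d) k a i : (i < d)%nat ->
  coord (setc y k a) i = if Nat.eqb i k then a else coord y i.
Proof. intros; unfold setc; rewrite coord_Rd_of; auto. Qed.

Lemma box_bound (d : nat) (Omega : Rd d -> Prop) (Omegan : nat -> Rd d -> Prop)
  (v : nat -> Rd d -> R) (v0 : Rd d -> R)
  (Hsub : forall n, subset (Omegan n) Omega)
  (Hconv : forall n, is_convex (Omegan n))
  (Hv : forall n, convex_fun_on (Omegan n) (v n))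
  (Hi : forall x, Omega x -> Un_cv (fun n => v n x) (v0 x))
  (rho : R) (Hrho : 0 < rho) :
  forall k, (k <= d)%nat -> forall c : Rd d,
    (forall y, inbox k c rho y -> exists N, forall n, (N <= n)%nat -> Omegan n y) ->
    exists N B, forall n, (N <= n)%nat -> forall y, inbox k c rho y ->
      Omegan n y /\ v n y <= B.
Proof.
  induction k as [|k IH]; intros Hk c Hgood.
  - assert (Hc : inbox 0 c rho c) by (intros i Hi'; split; [lia|auto]).
    destruct (Hgood c Hc) as [N1 HN1].
    assert (HO : Omega c) by (apply (Hsub N1); apply HN1; lia).
    destruct (Hi c HO 1 ltac:(lra)) as [N2 HN2].
    exists (max N1 N2), (v0 c + 1). intros n Hn y Hy.
    assert (E : y = c) by (apply Rd_ext; intros i Hi'; apply (Hy i Hi'); lia).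
    subst y. split; [apply HN1; lia|].
    specialize (HN2 n ltac:(lia)). unfold R_dist in HN2. apply Rabs_def2 in HN2. lra.
  - set (cp := setc c k (coord c k + rho)).
    set (cm := setc c k (coord c k - rho)).
    assert (Hinc : forall s y, s = rho \/ s = - rho -> inbox k (setc c k (coord c k + s)) rho y ->
                    inbox (S k) c rho y).
    { intros s y Hs Hy i Hi'. destruct (Hy i Hi') as [H1 H2]. rewrite coord_setc in H1, H2 by auto.
      split; intros Hik.
      - destruct (Nat.eqb_spec i k).
        + subst i. rewrite H2 by lia. replace (coord c k + s - coord c k) with s by ring.
          destruct Hs as [->| ->]; [rewrite Rabs_right by lra; lra| rewrite Rabs_Ropp, Rabs_right by lra; lra].
        + apply H1; lia.
      - rewrite H2 by lia. destruct (Nat.eqb_spec i k); [lia|auto]. }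
    destruct (IH ltac:(lia) cp) as [N1 [B1 HB1]].
    { intros y Hy. apply Hgood. apply (Hinc rho); auto. }
    destruct (IH ltac:(lia) cm) as [N2 [B2 HB2]].
    { intros y Hy. apply Hgood. apply (Hinc (- rho)); [right; reflexivity|].
      unfold cm in Hy. replace (coord c k - rho) with (coord c k + - rho) in Hy by ring. auto. }
    exists (max N1 N2), (Rmax B1 B2). intros n Hn y Hy.
    set (yp := setc y k (coord c k + rho)).
    set (ym := setc y k (coord c k - rho)).
    assert (Hkd : (k < d)%nat) by lia.
    assert (Hyk : Rabs (coord y k - coord c k) <= rho) by (apply (Hy k Hkd); lia).
    apply Rabs_le_inv' in Hyk.
    assert (Hyp : inbox k cp rho yp).
    { intros i Hi'. unfold yp, cp. rewrite !coord_setc by auto. destruct (Nat.eqb_spec i k).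
      - split; intros; [lia|auto].
      - destruct (Hy i Hi') as [H1 H2]. split; intros; [apply H1; lia| apply H2; lia]. }
    assert (Hym : inbox k cm rho ym).
    { intros i Hi'. unfold ym, cm. rewrite !coord_setc by auto. destruct (Nat.eqb_spec i k).
      - split; intros; [lia|auto].
      - destruct (Hy i Hi') as [H1 H2]. split; intros; [apply H1; lia| apply H2; lia]. }
    set (t := (coord y k - (coord c k - rho)) / (2 * rho)).
    assert (Ht : 0 <= t <= 1).
    { unfold t; split.
      - apply Rmult_le_pos; [lra| apply Rlt_le, Rinv_0_lt_compat; lra].
      - apply (Rmult_le_reg_r (2 * rho)); [lra|]. unfold Rdiv. rewrite Rmult_assoc, Rinv_l by lra. lra. }
    assert (E : y = comb t yp ym).
    { apply Rd_ext; intros i Hi'. change (coord (comb t yp ym) i) with (t * coord yp i + (1 - t) * coord ym i).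
      unfold yp, ym; rewrite !coord_setc by auto. destruct (Nat.eqb_spec i k).
      - subst i. unfold t. field. lra.
      - ring. }
    destruct (HB1 n ltac:(lia) yp Hyp) as [Op Vp].
    destruct (HB2 n ltac:(lia) ym Hym) as [Om Vm].
    rewrite E. split.
    + apply Hconv; auto.
    + eapply Rle_trans. apply Hv; auto.
      assert (B1 <= Rmax B1 B2) by apply Rmax_l. assert (B2 <= Rmax B1 B2) by apply Rmax_r.
      nra.
Qed.

Theorem mainTheorem8 (d : nat) (Omega : Rd d -> Prop)
  (Omegan : nat -> Rd d -> Prop) (v : nat -> Rd d -> R) (v0 : Rd d -> R)
  (b : nat -> Rd d -> R) (btilde : Rd d -> R)
  (HOmega : is_open Omega /\ is_convex Omega /\ is_bounded Omega /\ nonempty Omega)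
  (HOmegan : forall n, is_open (Omegan n) /\ is_convex (Omegan n) /\
                       nonempty (Omegan n) /\ subset (Omegan n) Omega)
  (Hexh : forall delta, 0 < delta -> exists N, forall n, (N <= n)%nat ->
            subset (closure (inner_set Omega delta)) (Omegan n) /\
            subset (Omegan n) Omega)
  (Hv : forall n, convex_fun_on (Omegan n) (v n))
  (Hv0 : convex_fun_on Omega v0)
  (Hi : forall x, Omega x -> Un_cv (fun n => v n x) (v0 x))
  (Hii_border : forall n y, boundary (Omegan n) y -> is_liminf (Omegan n) (v n) y (b n y))
  (Hii_cont : forall n, continuous_on (boundary (Omegan n)) (b n))
  (Hiii_cont : continuous_on (boundary Omega) btilde)
  (Hiii_lim : top_lim (fun n => graph_on_boundary (Omegan n) (b n))
                      (graph_on_boundary Omega btilde)) :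
  forall x, boundary Omega x -> liminf_le Omega v0 x (btilde x).
Proof.
  intros x Hx e r He Hr.
  destruct HOmega as [Hop [Hcvx [_ [p Hp]]]].
  destruct (Hop p Hp) as [R0 [HR0 Hball]].
  assert (HSd : 1 <= INR (S d)) by (apply (le_INR 1); lia).
  set (rho := R0 / (4 * INR (S d))).
  assert (Hrho : 0 < rho) by (unfold rho; apply Rdiv_lt_0_compat; lra).
  assert (HrhoR : INR (S d) * rho = R0 / 4) by (unfold rho; field; lra).
  assert (Hgood : forall y, inbox d p rho y -> exists N, forall n, (N <= n)%nat -> Omegan n y).
  { intros y Hy.
    assert (Hyp : forall i, (i < d)%nat -> Rabs (coord p i - coord y i) <= rho).
    { intros i Hi'. rewrite Rabs_minus_sym. apply (Hy i Hi'); lia. }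
    assert (Hin : inner_set Omega (rho / 2) y).
    { split.
      - apply Hball. eapply Rle_lt_trans. apply (dist_le_box p y rho); [lra|exact Hyp]. lra.
      - exists rho. split; [lra|]. intros z Hz.
        destruct (Rle_dec rho (distRd y z)) as [|Hn]; auto. exfalso.
        destruct Hz as [_ Hz]. destruct (Hz rho Hrho) as [w [Hw Hzw]].
        apply Hw, Hball.
        eapply Rle_lt_trans. apply (dist_le_box p w (3 * rho)); [lra|].
        + intros i Hi'.
          replace (coord p i - coord w i) with ((coord p i - coord y i) + (coord y i - coord z i) + (coord z i - coord w i)) by ring.
          eapply Rle_trans; [apply Rabs_triang|]. eapply Rle_trans; [apply Rplus_le_compat_r, Rabs_triang|].
          pose proof (Hyp i Hi'). pose proof (coord_le_dist y z i). pose proof (coord_le_dist z w i). lra.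
        + lra. }
    destruct (Hexh (rho / 2) ltac:(lra)) as [N HN]. exists N. intros n Hn.
    apply (proj1 (HN n Hn)). intros e' He'. exists y. split; auto.
    eapply Rle_lt_trans. apply (dist_le_box y y 0); [lra|]. intros; rewrite Rminus_diag, Rabs_R0; lra. lra. }
  destruct (box_bound d Omega Omegan v v0 (fun n => proj2 (proj2 (proj2 (HOmegan n))))
             (fun n => proj1 (proj2 (HOmegan n))) Hv Hi rho Hrho d (le_n d) p Hgood) as [N1 [M HM]].
  set (A := btilde x).
  assert (HS : graph_on_boundary Omega btilde (x, A)) by (split; simpl; auto).
  destruct (proj2 (proj2 (Hiii_lim (x, A))) HS) as [zs [N0 [Hzs Hzcv]]].
  set (D := distRd p x).
  assert (HD : 0 <= D) by (unfold D, distRd; apply sqrt_pos).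
  set (C := Rabs (M - A - e / 2) + INR (S d) * D).
  assert (HC : INR (S d) * D <= C /\ Rabs (M - A - e / 2) <= C).
  { unfold C. pose proof (Rabs_pos (M - A - e/2)). split; nra. }
  assert (HC0 : 0 <= C) by (pose proof (Rabs_pos (M - A - e/2)); nra).
  set (mu := Rmin (1/2) (Rmin (e / (4 * (C + 1))) (r / (4 * (C + 1))))).
  assert (Hmu1 : 0 < mu <= 1/2).
  { unfold mu. split.
    - apply Rmin_glb_lt; [lra|]. apply Rmin_glb_lt; apply Rdiv_lt_0_compat; lra.
    - apply Rmin_l. }
  assert (Hmue : mu * (C + 1) <= e / 4).
  { assert (mu <= e / (4 * (C + 1))) by (unfold mu; eapply Rle_trans; [apply Rmin_r| apply Rmin_l]).
    replace (e / 4) with (e / (4 * (C + 1)) * (C + 1)) by (field; lra). nra. }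
  assert (Hmur : mu * (C + 1) <= r / 4).
  { assert (mu <= r / (4 * (C + 1))) by (unfold mu; eapply Rle_trans; [apply Rmin_r| apply Rmin_r]).
    replace (r / 4) with (r / (4 * (C + 1)) * (C + 1)) by (field; lra). nra. }
  set (eta := rho * mu / 2).
  assert (Heta : 0 < eta) by (unfold eta; nra).
  destruct (Hzcv (Rmin eta (e / 4))) as [Ncv HNcv].
  { apply Rmin_glb_lt; lra. }
  set (q := @Rd_of d (fun i => (1 - mu) * coord x i + mu * coord p i)).
  assert (Hbound : forall n, (max N0 (max N1 Ncv) <= n)%nat ->
            Omegan n q /\ v n q <= (1 - mu) * (A + e / 2) + mu * M).
  { intros n Hn.
    destruct (Hzs n ltac:(lia)) as [Hyb Hyv].
    destruct (distRd1_split _ _ _ (HNcv n ltac:(lia))) as [Hd1 Hd2]. simpl in Hd1, Hd2.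
    set (yn := fst (zs n)) in *.
    assert (Hd1' : distRd yn x < eta) by (eapply Rlt_le_trans; [exact Hd1| apply Rmin_l]).
    assert (Hd2' : Rabs (snd (zs n) - A) < e / 4) by (eapply Rlt_le_trans; [exact Hd2| apply Rmin_r]).
    destruct (proj2 (Hii_border n yn Hyb) (e / 4) eta ltac:(lra) Heta) as [xn [Hxn [Hxy Hvx]]].
    set (wn := @Rd_of d (fun i => coord p i + ((1 - mu) / mu) * (coord x i - coord xn i))).
    assert (Hw : inbox d p rho wn).
    { intros i Hi'. split; [intros _| intros; lia].
      unfold wn. rewrite coord_Rd_of by auto.
      replace (coord p i + (1 - mu) / mu * (coord x i - coord xn i) - coord p i)
        with ((1 - mu) / mu * (coord x i - coord xn i)) by ring.
      rewrite Rabs_mult. rewrite (Rabs_right ((1 - mu) / mu)).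
      2: { apply Rle_ge, Rmult_le_pos; [lra| apply Rlt_le, Rinv_0_lt_compat; lra]. }
      assert (Ha : Rabs (coord x i - coord xn i) < rho * mu).
      { replace (coord x i - coord xn i) with ((coord x i - coord yn i) + (coord yn i - coord xn i)) by ring.
        eapply Rle_lt_trans; [apply Rabs_triang|].
        pose proof (coord_le_dist yn x i). pose proof (coord_le_dist xn yn i).
        rewrite Rabs_minus_sym in H. rewrite Rabs_minus_sym in H0. unfold eta in *. lra. }
      assert (HX : (1 - mu) / mu * mu = 1 - mu) by (field; lra).
      assert (0 <= (1 - mu) / mu) by (apply Rmult_le_pos; [lra| apply Rlt_le, Rinv_0_lt_compat; lra]).
      pose proof (Rabs_pos (coord x i - coord xn i)). nra. }
    destruct (HM n ltac:(lia) wn Hw) as [Hwo Hwv].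
    assert (Eq : q = comb (1 - mu) xn wn).
    { apply Rd_ext; intros i Hi'.
      change (coord (comb (1 - mu) xn wn) i) with ((1 - mu) * coord xn i + (1 - (1 - mu)) * coord wn i).
      unfold q, wn. rewrite !coord_Rd_of by auto. field. lra. }
    rewrite Eq. destruct (HOmegan n) as [_ [Hcn _]]. split.
    - apply Hcn; auto; lra.
    - eapply Rle_trans. apply Hv; auto; lra.
      rewrite Hyv in Hd2'. fold yn in Hd2'. apply Rabs_def2 in Hd2'. nra. }
  exists q. split; [|split].
  - destruct (Hbound _ (le_n _)) as [Ho _]. apply (proj2 (proj2 (proj2 (HOmegan _)))) in Ho. exact Ho.
  - eapply Rle_lt_trans. apply (dist_le_box q x (mu * D)); [nra|].
    + intros i Hi'. unfold q. rewrite coord_Rd_of by auto.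
      replace ((1 - mu) * coord x i + mu * coord p i - coord x i) with (mu * (coord p i - coord x i)) by ring.
      rewrite Rabs_mult, Rabs_right by lra. pose proof (coord_le_dist p x i). fold D in H. nra.
    + nra.
  - assert (HOq : Omega q).
    { destruct (Hbound _ (le_n _)) as [Ho _]. apply (proj2 (proj2 (proj2 (HOmegan _)))) in Ho. exact Ho. }
    assert (Hle : v0 q <= (1 - mu) * (A + e / 2) + mu * M).
    { apply (Un_cv_le (fun n => v n q) _ _ (max N0 (max N1 Ncv)) (Hi q HOq)). intros n Hn. apply (Hbound n Hn). }
    assert (M - A - e/2 <= Rabs (M - A - e/2)) by apply Rle_abs.
    fold A. nra.
Qed.
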